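(* Consider a single-relay network with no direct source–destination link. Let $q$ be a prime power, $K\ge1$, $N_{\mathrm S}\ge K$, $N_{\mathrm R}\ge 1$. A source S draws $N_{\mathrm S}$ coefficient vectors i.i.d. uniformly from $\mathbb{F}_q^K$ and sends one packet per vector to a relay R, each packet erased independently with probability $\epsilon_{\mathrm{SR}}$ (independently of the coefficients); the destination D receives nothing from S. R, having received $m_1$ packets with coefficient matrix $\mathbf{C}_{\mathrm S\to\mathrm R}\in\mathbb{F}_q^{m_1\times K}$, draws $\mathbf{G}\in\mathbb{F}_q^{N_{\mathrm R}\times m_1}$ with i.i.d. uniform entries and transmits the $N_{\mathrm R}$ rows of $\mathbf{G}\mathbf{C}_{\mathrm S\to\mathrm R}$ to D, each erased independently with probability $\epsilon_{\mathrm{RD}}$. Decoding succeeds iff the received recoded coefficient vectors span a space of rank $K$. Then the probability of successful decoding equals $$P^{(1)}_{\mathrm R}=P(N_{\mathrm S},\epsilon_{\mathrm{SR}})\,P(N_{\mathrm R},\epsilon_{\mathrm{RD}}),\qquad\text{where } P(N,\epsilon)=\sum_{k=K}^{N}\binom{N}{k}(1-\epsilon)^k\epsilon^{N-k}\prod_{i=0}^{K-1}\left(1-q^{i-k}\right),$$ with $P(N,\epsilon):=0$ if $N<K$.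
   Context: $P(N,\epsilon)$ is the probability that, of $N$ packets carrying i.i.d. uniform coefficient vectors in $\mathbb{F}_q^K$ each independently erased with probability $\epsilon$, the received ones have rank $K$. *)

(* Defs.v *)
From HB Require Import structures.
From mathcomp Require Import all_boot all_order all_algebra all_field.
Set Implicit Arguments. Unset Strict Implicit. Unset Printing Implicit Defensive.
Import Order.TTheory GRing.Theory Num.Theory.
Local Open Scope ring_scope.

(* Probability that a given set S of the N packets (indices 'I_N) is exactly
   the set of received (non-erased) packets, erasures i.i.d. with prob. eps. *)
Definition erasure_w (R : pzRingType) (eps : R) (N : nat) (S : {set 'I_N}) : R :=
  (1 - eps) ^+ #|S| * eps ^+ (N - #|S|).

(* The paper's P(N, eps) for a field of size q and dimension K;
   the sum is empty (= 0) when N < K. *)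
Definition Psucc (R : fieldType) (q K N : nat) (eps : R) : R :=
  \sum_(K <= k < N.+1)
     'C(N, k)%:R * (1 - eps) ^+ k * eps ^+ (N - k)
     * \prod_(i < K) (1 - ((q%:R) ^+ (k - i))^-1).

(* Coefficient matrix received at D:
   C  : source coefficient vectors (row i = vector of packet i),
   S1 : set of source packets received at R,
   G  : relay recoding coefficients; only the columns indexed by S1 are used
        (the entries G j i, i in S1, are i.i.d. uniform, i.e. an N_R x m1 uniform
        matrix applied to the received rows C_{S->R}),
   S2 : set of recoded packets received at D.
   Row j is the recoded vector (G C_{S->R})_j if j in S2, and 0 otherwise
   (zero rows do not change the rank of the received span). *)
Definition received_mx (F : fieldType) (K NS NR : nat)
    (C : 'M[F]_(NS, K)) (S1 : {set 'I_NS}) (G : 'M[F]_(NR, NS))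
    (S2 : {set 'I_NR}) : 'M[F]_(NR, K) :=
  \matrix_(j < NR, k < K)
     (if j \in S2 then \sum_(i in S1) G j i * C i k else 0).

Definition relay_success_prob (R : realFieldType) (F : finFieldType)
    (K NS NR : nat) (eSR eRD : R) : R :=
  \sum_(C : 'M[F]_(NS, K)) \sum_(G : 'M[F]_(NR, NS))
  \sum_(S1 : {set 'I_NS}) \sum_(S2 : {set 'I_NR})
     ((#|F|%:R) ^+ (NS * K))^-1 * ((#|F|%:R) ^+ (NR * NS))^-1
     * erasure_w eSR S1 * erasure_w eRD S2
     * (\rank (received_mx C S1 G S2) == K)%:R.

(* Main.v *)
Require Import Defs.
From HB Require Import structures.
From mathcomp Require Import all_boot all_order all_algebra all_field.
Set Implicit Arguments. Unset Strict Implicit. Unset Printing Implicit Defensive.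
Import Order.TTheory GRing.Theory Num.Theory.
Local Open Scope ring_scope.
From mathcomp Require Import zify.
Lemma rank_col_row (F : fieldType) k p (B : 'M[F]_(k,p)) (w : 'rV_p) :
  \rank (col_mx B w) = (\rank B + ~~ (w <= B)%MS)%N.
Proof.
rewrite -addsmxE.
have [wB|nwB] := boolP (w <= B)%MS.
  by rewrite addn0; apply/eqmx_rank/eqmxP/addsmx_idPl.
have lt : (\rank B < \rank (B + w))%N.
  apply: rank_ltmx; rewrite ltmxE addsmxSl /=.
  by apply: contra nwB; apply: submx_trans (addsmxSr B w).
have le := (mxrank_adds_leqif B w).1; have := rank_leq_row w.
lia.
Qed.

Definition Pmx (F : fieldType) n (S : {set 'I_n}) : 'M[F]_n :=
  diag_mx (\row_(i < n) ((i \in S)%:R : F)).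

Lemma rank_Pmx (F : fieldType) n (S : {set 'I_n}) : \rank (Pmx F S) = #|S|.
Proof.
have Hd := @mxdirect_delta F 'I_n (mem S) n id (fun _ _ _ _ h => h).
move/mxdirectP: Hd => /= Hd.
have -> : #|S| = \rank (\sum_(i in S) <<delta_mx 0 i : 'rV[F]_n>>)%MS.
  rewrite Hd -sum1_card; apply: eq_bigr => i _.
  by rewrite mxrank_gen mxrank_delta.
apply: eqmx_rank; apply/andP; split.
  apply/row_subP => i; rewrite row_diag_mx mxE.
  have [iS|iS] := boolP (i \in S); rewrite /= ?mulr1n ?mulr0n; last by rewrite scale0r sub0mx.
  by rewrite scale1r (sumsmx_sup i) // genmxE.
apply/sumsmx_subP => i iS; rewrite genmxE.
have -> : delta_mx 0 i = row i (Pmx F S) by rewrite row_diag_mx mxE iS /= mulr1n scale1r.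
exact: row_sub.
Qed.
Lemma card_rowspace (F : finFieldType) k p (M : 'M[F]_(k,p)) :
  #|[set w : 'rV[F]_p | (w <= M)%MS]| = (#|F| ^ \rank M)%N.
Proof.
have ->: [set w : 'rV_p | (w <= M)%MS] = [set u *m row_base M | u in 'rV_(\rank M)].
  apply/setP => w; rewrite inE -(eq_row_base M).
  by apply/submxP/imsetP => [[u ->]|[u _ ->]]; exists u.
rewrite card_imset ?card_mx ?mul1n //.
have [B AB1] := row_freeP (row_base_free M); apply: can_inj (mulmx^~ B) _ => v.
by rewrite -mulmxA AB1 mulmx1.
Qed.
Lemma fiber_card (U V : finZmodType) (f : U -> V)
  (fD : forall x y, f (x + y) = f x + f y) (T : {set V}) :
  (forall w, w \in T -> exists u, f u = w) ->
  #|[set u | f u \in T]| = (#|T| * #|[set u | f u == 0%R]|)%N.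
Proof.
move=> surj.
have f0 : f 0 = 0 by apply: (addrI (f 0)); rewrite -fD !addr0.
rewrite -sum_nat_const -sum1_card (partition_big f (mem T)) => [|u]; last by rewrite inE.
apply: eq_bigr => w wT; have [u0 fu0] := surj w wT.
have -> : #|[set u | f u == 0%R]| = #|[set u0 + k | k in [set u | f u == 0%R]]|.
  by rewrite card_imset //; apply: addrI.
rewrite -sum1_card; apply: eq_bigl => u; rewrite !inE.
apply/idP/imsetP => [/andP[_ /eqP fu]|[k]]; last first.
  by rewrite inE => /eqP fk ->; rewrite fD fu0 fk addr0 eqxx andbT.
exists (u - u0); last by rewrite addrC subrK.
rewrite inE; apply/eqP; apply: (addrI w).
by rewrite -{1}fu0 -fD addrC subrK fu addr0.
Qed.
Lemma count_sub (F : finFieldType) n p (Y : 'M[F]_(n,p)) k (M : 'M_(k,p)) :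
  (M <= Y)%MS ->
  (#|[set v : 'rV_n | (v *m Y <= M)%MS]| * #|F| ^ \rank Y
     = #|F| ^ \rank M * #|F| ^ n)%N.
Proof.
move=> MY.
have fD : forall x y : 'rV[F]_n, (x + y) *m Y = x *m Y + y *m Y.
  by move=> x y; rewrite mulmxDl.
have surj : forall k' (M' : 'M_(k',p)), (M' <= Y)%MS ->
    forall w, w \in [set w : 'rV_p | (w <= M')%MS] -> exists u, u *m Y = w.
  move=> k' M' MY' w; rewrite inE => wM.
  by have /submxP[u ->] := submx_trans wM MY'; exists u.
have h1 := fiber_card fD (surj _ M MY).
have h2 := fiber_card fD (surj _ Y (submx_refl Y)).
rewrite !card_rowspace in h1 h2.
have -> : [set v : 'rV_n | (v *m Y <= M)%MS] =
   [set u | u *m Y \in [set w : 'rV_p | (w <= M)%MS]].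
  by apply/setP => v; rewrite !inE.
rewrite h1.
have -> : (#|F| ^ n = #|[set u | u *m Y \in [set w : 'rV_p | (w <= Y)%MS]]|)%N.
  rewrite (_ : [set u | _] = setT) ?cardsT ?card_mx ?mul1n //.
  by apply/setP => u; rewrite !inE submxMl.
by rewrite h2 mulnAC mulnA.
Qed.
From mathcomp Require Import ring.
Lemma rank_col_top (F : fieldType) k p (B : 'M[F]_(k,p)) (w : 'rV_p) :
  \rank (col_mx w B) = \rank (col_mx B w).
Proof. by rewrite -!addsmxE addsmxC. Qed.

Lemma card_gt0F (F : finFieldType) : (0 < #|F|)%N.
Proof. by apply/card_gt0P; exists 0. Qed.

Lemma countL (R : numFieldType) (F : finFieldType) n p (Y : 'M[F]_(n,p)) K :
  (#|[set A : 'M[F]_(K,n) | row_free (A *m Y)]|%:R : R) =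
  ((#|F|%:R ^+ n) ^+ K * \prod_(i < K) (1 - ((#|F|%:R : R) ^+ (\rank Y - i))^-1)).
Proof.
have q0 : (#|F|%:R : R) != 0 by rewrite pnatr_eq0 -lt0n card_gt0F.
elim: K => [|K IH].
  rewrite expr0 big_ord0 mulr1.
  rewrite (_ : [set A : 'M[F]_(0,n) | _] = setT) ?cardsT ?card_mx //.
  by apply/setP => A; rewrite !inE /row_free -leqn0 rank_leq_row.
have step : #|[set A : 'M[F]_(K.+1,n) | row_free (A *m Y)]| =
   (\sum_(A' in [set A' : 'M[F]_(K,n) | row_free (A' *m Y)])
      #|[set v : 'rV_n | ~~ (v *m Y <= A' *m Y)%MS]|)%N.
  rewrite -[K.+1]/(1 + K)%N -sum1_card.
  rewrite (partition_big dsubmx (mem [set A' : 'M[F]_(K,n) | row_free (A' *m Y)])) /=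
     => [|A]; last first.
    rewrite !inE -{1}(vsubmxK A) mul_col_mx /row_free rank_col_top rank_col_row.
    have := rank_leq_row (dsubmx A *m Y); case: (~~ _); lia.
  apply: eq_bigr => A' rA'.
  rewrite (reindex (col_mx^~ A')) /=; last first.
    exists usubmx => [v _ | vA]; first by rewrite col_mxKu.
    by case/andP=> _ /eqP <-; rewrite vsubmxK.
  rewrite -sum1_card; apply: eq_bigl => v; rewrite !inE col_mxKd eqxx andbT.
  rewrite mul_col_mx /row_free rank_col_top rank_col_row.
  move: rA'; rewrite inE /row_free => /eqP ->; case: (~~ _); lia.
rewrite step natr_sum.
set c : R := (#|F|%:R ^+ n * (1 - (#|F|%:R ^+ (\rank Y - K))^-1)).
rewrite (eq_bigr (fun _ => c)); last first.
  move=> A'; rewrite inE => rA'.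
  have rk : \rank (A' *m Y) = K := eqP rA'.
  have KY : (K <= \rank Y)%N by rewrite -rk mxrankM_maxr.
  have hc := count_sub (submxMl A' Y); rewrite rk in hc.
  have hC := cardsC [set v : 'rV[F]_n | (v *m Y <= A' *m Y)%MS].
  rewrite card_mx mul1n in hC.
  have -> : [set v : 'rV[F]_n | ~~ (v *m Y <= A' *m Y)%MS] =
            ~: [set v : 'rV[F]_n | (v *m Y <= A' *m Y)%MS].
    by apply/setP => v; rewrite !inE.
  have hC' : ((#|~: [set v : 'rV[F]_n | (v *m Y <= A' *m Y)%MS]|)%:R : R)
     = #|F|%:R ^+ n - #|[set v : 'rV[F]_n | (v *m Y <= A' *m Y)%MS]|%:R.
    by rewrite -natrX -hC natrD addrAC subrr add0r.
  rewrite hC'.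
  have hc' := congr1 (fun x => (x%:R : R)) hc; rewrite /= !natrM !natrX in hc'.
  have qY : (#|F|%:R : R) ^+ \rank Y != 0 by rewrite expf_neq0.
  have -> : (#|[set v : 'rV[F]_n | (v *m Y <= A' *m Y)%MS]|%:R : R)
     = #|F|%:R ^+ K * #|F|%:R ^+ n / #|F|%:R ^+ \rank Y.
    by rewrite -hc' mulfK.
  rewrite /c exprB // ?unitfE //; field.
  by rewrite qY expf_neq0.
rewrite sumr_const -(mulr_natr c) IH big_ord_recr /= exprS /c; ring.
Qed.
Definition pK (R : fieldType) (q K m : nat) : R :=
  \prod_(i < K) (1 - ((q%:R : R) ^+ (m - i))^-1).

Lemma pK0 (R : fieldType) q K m : (m < K)%N -> pK R q K m = 0.
Proof.
move=> mK; rewrite /pK (bigD1 (Ordinal mK)) //= subnn expr0 invr1 subrr.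
by rewrite mul0r.
Qed.

Lemma sum_Psucc (R : fieldType) q K N (e : R) :
  \sum_(S : {set 'I_N}) erasure_w e S * pK R q K #|S| = Psucc q K N e.
Proof.
rewrite /Psucc.
have -> : \sum_(K <= k < N.+1) 'C(N, k)%:R * (1 - e) ^+ k * e ^+ (N - k)
     * \prod_(i < K) (1 - ((q%:R : R) ^+ (k - i))^-1)
   = \sum_(0 <= k < N.+1) 'C(N, k)%:R * (1 - e) ^+ k * e ^+ (N - k) * pK R q K k.
  case: (leqP K N.+1) => KN.
    rewrite [RHS](@big_cat_nat _ _ _ K) //= [X in _ = X + _]big1_seq ?add0r //.
    by move=> k /andP[_]; rewrite mem_index_iota => /andP[_ kK]; rewrite pK0 ?mulr0.
  rewrite big_geq ?(ltnW KN) // big1_seq // => k /andP[_ kN]; rewrite pK0 ?mulr0 //.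
  by move: KN kN; rewrite mem_index_iota; lia.
rewrite big_mkord.
rewrite (partition_big (fun S : {set 'I_N} => (inord #|S| : 'I_N.+1)) predT) //=.
apply: eq_bigr => k _.
have cardS : forall S : {set 'I_N}, (inord #|S| == k :> 'I_N.+1) = (#|S| == k).
  move=> S; have SN : (#|S| <= N)%N by have := max_card (mem S); rewrite card_ord.
  by rewrite -val_eqE /= inordK.
rewrite (eq_bigr (fun _ => (1 - e) ^+ k * e ^+ (N - k) * pK R q K k)); last first.
  move=> S /eqP <-; rewrite /erasure_w inordK // ltnS.
  by have := max_card (mem S); rewrite card_ord.
rewrite sumr_const (eq_card (B := [set S : {set 'I_N} | #|S| == k])); last first.
  by move=> S; rewrite inE; exact: (cardS S).
have := card_draws 'I_N k; rewrite card_ord => <-; rewrite -mulr_natl; ring.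
Qed.

Lemma sum_ind (R : ringType) (T : finType) (P : pred T) :
  \sum_(x : T) ((P x)%:R : R) = (#|[set x | P x]|)%:R.
Proof.
rewrite -sum1_card natr_sum [RHS]big_mkcond /=; apply: eq_bigr => x _.
by rewrite inE; case: (P x).
Qed.

Lemma recv_eq (F : fieldType) K NS NR (C : 'M[F]_(NS, K)) S1 (G : 'M[F]_(NR, NS)) S2 :
  received_mx C S1 G S2 = Pmx F S2 *m (G *m (Pmx F S1 *m C)).
Proof.
apply/matrixP => j k; rewrite /received_mx /Pmx mul_diag_mx !mxE.
case: (j \in S2); rewrite /= ?mul1r ?mul0r //.
rewrite big_mkcond /=; apply: eq_bigr => i _; rewrite mul_diag_mx !mxE.
by case: (i \in S1); rewrite /= ?mul1r ?mul0r ?mulr0.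
Qed.

Lemma rank_recv (F : fieldType) K NS NR (C : 'M[F]_(NS, K)) S1 (G : 'M[F]_(NR, NS)) S2 :
  \rank (received_mx C S1 G S2) = \rank (C^T *m Pmx F S1 *m G^T *m Pmx F S2).
Proof.
rewrite recv_eq -mxrank_tr !trmx_mul /Pmx !tr_diag_mx.
by [].
Qed.

Lemma sumG (R : numFieldType) (F : finFieldType) K NS NR (S2 : {set 'I_NR})
  (B : 'M[F]_(K, NS)) : row_free B ->
  \sum_(X : 'M[F]_(NS, NR)) ((\rank (B *m X *m Pmx F S2) == K)%:R : R)
   = (#|F| ^ (NS * NR))%:R * pK R #|F| K #|S2|.
Proof.
move=> rfB.
have fD : forall x y : 'M[F]_(NS, NR), B *m (x + y) = B *m x + B *m y.
  by move=> x y; rewrite mulmxDr.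
have [B' BB'] := row_freeP rfB.
have surj : forall (T : {set 'M[F]_(K, NR)}) w, w \in T -> exists u, B *m u = w.
  by move=> T w _; exists (B' *m w); rewrite mulmxA BB' mul1mx.
rewrite sum_ind.
have -> : [set X : 'M[F]_(NS, NR) | \rank (B *m X *m Pmx F S2) == K] =
  [set X | B *m X \in [set Z : 'M[F]_(K, NR) | row_free (Z *m Pmx F S2)]].
  by apply/setP => X; rewrite !inE.
have hker := fiber_card fD (surj setT).
rewrite (fiber_card fD (surj _)).
have hall : [set u | B *m u \in [set: 'M[F]_(K, NR)]] = setT.
  by apply/setP => u; rewrite !inE.
rewrite hall !cardsT !card_mx in hker.
rewrite natrM countL rank_Pmx hker natrM !natrX /pK.
rewrite mulnC exprM; ring.
Qed.

Lemma inner (R : numFieldType) (F : finFieldType) K NS NR (S1 : {set 'I_NS})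
   (S2 : {set 'I_NR}) :
  \sum_(C : 'M[F]_(NS, K)) \sum_(G : 'M[F]_(NR, NS))
     ((\rank (received_mx C S1 G S2) == K)%:R : R)
  = (#|F| ^ (NS * K))%:R * (#|F| ^ (NR * NS))%:R
      * pK R #|F| K #|S1| * pK R #|F| K #|S2|.
Proof.
rewrite (reindex (@trmx F K NS)) /=; last by exists (@trmx F NS K) => X _; rewrite trmxK.
rewrite (eq_bigr (fun A : 'M[F]_(K,NS) => (row_free (A *m Pmx F S1))%:R
      * ((#|F| ^ (NS * NR))%:R * pK R #|F| K #|S2|))); last first.
  move=> A _.
  rewrite (reindex (@trmx F NS NR)) /=; last by exists (@trmx F NR NS) => X _; rewrite trmxK.
  under eq_bigr do rewrite rank_recv !trmxK.
  have [rf|nrf] := boolP (row_free (A *m Pmx F S1)).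
    by rewrite mul1r -(sumG R S2 rf); apply eq_bigr => X _.
  rewrite mul0r big1 // => X _.
  have h1 := leq_trans (mxrankM_maxl _ (Pmx F S2)) (mxrankM_maxl (A *m Pmx F S1) X).
  have h2 := rank_leq_row (A *m Pmx F S1).
  suff /negbTE -> : (\rank (A *m Pmx F S1 *m X *m Pmx F S2) != K) by [].
  move: nrf; rewrite /row_free => ne; rewrite neq_ltn (leq_ltn_trans h1) //.
  by rewrite ltn_neqAle ne h2.
rewrite -mulr_suml sum_ind countL rank_Pmx /pK !natrX -!exprM (mulnC NR NS).
ring.
Qed.

Unset Implicit Arguments.
Set Strict Implicit.

Theorem mainTheorem5 (R : realFieldType) (F : finFieldType)
    (K NS NR : nat) (eSR eRD : R) :
  (1 <= K)%N -> (K <= NS)%N -> (1 <= NR)%N ->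
  0 <= eSR <= 1 -> 0 <= eRD <= 1 ->
  relay_success_prob F K NS NR eSR eRD =
    Psucc #|F| K NS eSR * Psucc #|F| K NR eRD.
Proof.
move=> _ _ _ _ _.
rewrite /relay_success_prob -!sum_Psucc big_distrlr /=.
under eq_bigr => C _ do rewrite exchange_big.
rewrite exchange_big /=.
under eq_bigr => S1 _ do under eq_bigr => C _ do rewrite exchange_big.
under eq_bigr => S1 _ do rewrite exchange_big.
apply: eq_bigr => S1 _; apply: eq_bigr => S2 _.
set c := _ * _ * erasure_w eSR S1 * erasure_w eRD S2.
rewrite (eq_bigr (fun C : 'M[F]_(NS, K) => c * \sum_(G : 'M[F]_(NR, NS))
    ((\rank (received_mx C S1 G S2) == K)%:R : R))); last by move=> C _; rewrite mulr_sumr.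
rewrite -mulr_sumr inner /c.
have q0 : (#|F|%:R : R) != 0 by rewrite pnatr_eq0 -lt0n card_gt0F.
rewrite !natrX; field; by rewrite !expf_neq0.
Qed.
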